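(* Let $(q_n),(r_n)$ be complex sequences vanishing faster than any negative power of $|n|$ as $n\to\pm\infty$ with $1-q_nr_n\neq0$ and $1+q_nr_{n+1}\neq0$ for all $n\in\mathbb Z$. Set $D_n=\prod_{j=-\infty}^n(1-q_jr_j)$, $E_n=\prod_{j=-\infty}^n(1+q_jr_{j+1})$, and define $u_n=q_nE_{n-1}/D_n$ and $s_n=r_{n+1}D_n/E_n$. Then $$D_n=\frac1{\prod_{k=-\infty}^{n-1}(1+u_{k+1}s_k)},\qquad E_n=\frac1{\prod_{k=-\infty}^{n}(1-u_ks_k)},$$ $$q_n=u_n\prod_{k=-\infty}^{n-1}\frac{1-u_ks_k}{1+u_{k+1}s_k},\qquad r_n=s_{n-1}\prod_{k=-\infty}^{n-1}\frac{1+u_ks_{k-1}}{1-u_ks_k}.$$ *)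

(* Defs.v *)
From Stdlib Require Import Reals ZArith.
From Coquelicot Require Import Coquelicot.

(* partial left-product: lpart a n m = prod_{j = n-m}^{n} a j *)
Fixpoint lpart (a : Z -> C) (n : Z) (m : nat) : C :=
  match m with
  | O => a n
  | S m' => Cmult (a (n - Z.of_nat (S m'))%Z) (lpart a n m')
  end.

Definition is_lprod (a : Z -> C) (n : Z) (P : C) : Prop :=
  filterlim (lpart a n) eventually (locally P).

Definition rapidly_decreasing (a : Z -> C) : Prop :=
  forall (k : nat) (eps : R), (0 < eps)%R ->
    exists N : Z, forall n : Z, (N <= Z.abs n)%Z ->
      (IZR (Z.abs n) ^ k * Cmod (a n) < eps)%R.

(* Main.v *)
Require Import Defs.
From Stdlib Require Import Reals ZArith Lra Lia.
From Coquelicot Require Import Coquelicot.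

Lemma limC (f : nat -> C) L : filterlim f eventually (@locally C_UniformSpace L) <->
  forall eps, (0 < eps)%R -> exists N, forall m, (N <= m)%nat -> (Cmod (Cminus (f m) L) < eps)%R.
Proof.
split.
- intros H eps Heps.
  assert (Hs : (0 < sqrt 2)%R) by (apply sqrt_lt_R0; lra).
  assert (Hp : (0 < eps / sqrt 2)%R) by (apply Rdiv_lt_0_compat; lra).
  destruct (H _ (locally_ball L (mkposreal _ Hp))) as [N HN].
  exists N. intros m Hm. specialize (HN m Hm).
  apply C_NormedModule_mixin_compat2 in HN. simpl in HN.
  replace eps with (sqrt 2 * (eps / sqrt 2))%R by (field; lra). exact HN.
- intros H. apply (proj2 (filterlim_locally f L)). intros eps.
  destruct (H eps (cond_pos eps)) as [N HN]. exists N. intros m Hm.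
  apply C_NormedModule_mixin_compat1. apply HN; auto.
Qed.

Lemma lim_unique (f : nat -> C) x y :
  filterlim f eventually (@locally C_UniformSpace x) -> filterlim f eventually (@locally C_UniformSpace y) -> x = y.
Proof.
intros H1 H2.
exact (@filterlim_locally_unique nat C_AbsRing C_NormedModule eventually
  (Proper_StrongProper _ eventually_filter) f x y H1 H2).
Qed.

Lemma lim_mult (f g : nat -> C) x y :
  filterlim f eventually (@locally C_UniformSpace x) -> filterlim g eventually (@locally C_UniformSpace y) ->
  filterlim (fun m => Cmult (f m) (g m)) eventually (@locally C_UniformSpace (Cmult x y)).
Proof.
rewrite !limC. intros H1 H2 eps Heps.
assert (Hx := Cmod_ge_0 x). assert (Hy := Cmod_ge_0 y).
set (K := (Cmod x + Cmod y + 1)%R).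
set (d := Rmin 1 (eps / K)).
assert (Hd : (0 < d)%R) by (unfold d; apply Rmin_pos; [lra| apply Rdiv_lt_0_compat; unfold K; lra]).
destruct (H1 d Hd) as [N1 HN1]. destruct (H2 d Hd) as [N2 HN2].
exists (max N1 N2). intros m Hm.
specialize (HN1 m ltac:(lia)). specialize (HN2 m ltac:(lia)).
assert (Hd1 : (d <= 1)%R) by apply Rmin_l.
assert (Hd2 : (d <= eps / K)%R) by apply Rmin_r.
replace (f m * g m - x * y)%C with ((f m - x) * g m + x * (g m - y))%C by ring.
assert (Hg : (Cmod (g m) <= Cmod y + 1)%R).
{ assert (T := Cmod_triangle (g m - y) y). replace (g m - y + y)%C with (g m) in T by ring. lra. }
eapply Rle_lt_trans. apply Cmod_triangle. rewrite !Cmod_mult.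
assert (A1 : (Cmod (f m - x) * Cmod (g m) <= d * (Cmod y + 1))%R).
{ apply Rmult_le_compat; try apply Cmod_ge_0; lra. }
assert (A2 : (Cmod x * Cmod (g m - y) <= Cmod x * d)%R).
{ apply Rmult_le_compat_l; lra. }
assert (A3 : (d * K <= eps)%R).
{ unfold K in *. apply Rle_trans with (eps / (Cmod x + Cmod y + 1) * (Cmod x + Cmod y + 1))%R.
  apply Rmult_le_compat_r; lra. right; field; lra. }
assert (HK : (d * (Cmod y + 1) + Cmod x * d = d * K)%R) by (unfold K; ring).
destruct (Rle_lt_or_eq_dec _ _ (Cmod_ge_0 x)) as [Hx0|Hx0].
- assert (Cmod x * Cmod (g m - y) < Cmod x * d)%R by (apply Rmult_lt_compat_l; lra).
  assert (Cmod (f m - x) * Cmod (g m) <= d * (Cmod y + 1))%R by lra. lra.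
- rewrite <- Hx0 in *. 
  assert (Cmod (f m - x) * Cmod (g m) < d * (Cmod y + 1))%R.
  { apply Rle_lt_trans with (Cmod (f m - x) * (Cmod y + 1))%R.
    apply Rmult_le_compat_l. apply Cmod_ge_0. lra. apply Rmult_lt_compat_r; lra. }
  lra.
Qed.

Lemma lim_inv (f : nat -> C) (L : C) : L <> 0%C -> filterlim f eventually (@locally C_UniformSpace L) ->
  filterlim (fun m => Cinv (f m)) eventually (@locally C_UniformSpace (Cinv L)).
Proof.
intros HL H0. pose proof (proj1 (limC f L) H0) as H; clear H0. apply (proj2 (limC _ _)). intros eps Heps.
assert (HL' : (0 < Cmod L)%R) by (apply Cmod_gt_0; auto).
set (d := Rmin (Cmod L / 2) (eps * Cmod L * Cmod L / 2)).
assert (Hd : (0 < d)%R).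
{ unfold d. apply Rmin_pos. lra. apply Rdiv_lt_0_compat; [|lra].
  repeat apply Rmult_lt_0_compat; lra. }
destruct (H d Hd) as [N HN]. exists N. intros m Hm.
specialize (HN m Hm).
assert (H1 : (Cmod (f m - L) < Cmod L / 2)%R).
{ eapply Rlt_le_trans; [exact HN| apply Rmin_l]. }
assert (H2 : (Cmod (f m - L) < eps * Cmod L * Cmod L / 2)%R).
{ eapply Rlt_le_trans; [exact HN| apply Rmin_r]. }
assert (Hfm : (Cmod L / 2 <= Cmod (f m))%R).
{ assert (T := Cmod_triangle (f m) (Copp (Cminus (f m) L))).
  replace (f m + - (f m - L))%C with L in T by ring.
  rewrite Cmod_opp in T. lra. }
assert (Hf0 : f m <> 0%C) by (apply Cmod_gt_0; lra).
replace (/ f m - / L)%C with ((Copp (f m - L)) * / f m * / L)%C by (field; auto).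
rewrite !Cmod_mult, Cmod_opp, !Cmod_inv by auto.
apply Rle_lt_trans with (Cmod (f m - L) * (2 / Cmod L) * / Cmod L)%R.
{ apply Rmult_le_compat_r. left; apply Rinv_0_lt_compat; lra.
  apply Rmult_le_compat_l. apply Cmod_ge_0.
  apply Rle_trans with (/ (Cmod L / 2))%R.
  apply Rinv_le_contravar; lra. right; field; lra. }
apply Rmult_lt_reg_r with (Cmod L * Cmod L / 2)%R.
{ apply Rdiv_lt_0_compat; [|lra]. apply Rmult_lt_0_compat; lra. }
replace (Cmod (f m - L) * (2 / Cmod L) * / Cmod L * (Cmod L * Cmod L / 2))%R
  with (Cmod (f m - L)) by (field; lra).
lra.
Qed.

Lemma lpart_S a n m : lpart a n (S m) = Cmult (lpart a (n - 1)%Z m) (a n).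
Proof.
revert n. induction m as [|m IH]; intros n.
- simpl. f_equal; f_equal; lia.
- change (lpart a n (S (S m))) with (Cmult (a (n - Z.of_nat (S (S m)))%Z) (lpart a n (S m))).
  rewrite IH. change (lpart a (n-1) (S m)) with (Cmult (a (n - 1 - Z.of_nat (S m)))%Z (lpart a (n-1) m)).
  replace (n - 1 - Z.of_nat (S m))%Z with (n - Z.of_nat (S (S m)))%Z by lia. ring.
Qed.

Lemma lpart_ext (a : Z -> C) b n m : (forall j, a j = b j) -> lpart a n m = lpart b n m.
Proof. intros H. induction m; simpl; rewrite ?IHm; auto; rewrite H; auto. Qed.

Lemma lpart_mul (a : Z -> C) b n m : lpart (fun j => Cmult (a j) (b j)) n m = Cmult (lpart a n m) (lpart b n m).
Proof. induction m; simpl; auto. rewrite IHm. ring. Qed.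

Lemma lpart_nz (a : Z -> C) n m : (forall j, a j <> 0%C) -> lpart a n m <> 0%C.
Proof. intros H. induction m; simpl; auto. apply Cmult_neq_0; auto. Qed.

Lemma lpart_inv (a : Z -> C) n m : (forall j, a j <> 0%C) ->
  lpart (fun j => Cinv (a j)) n m = Cinv (lpart a n m).
Proof.
intros H. induction m; simpl; auto. rewrite IHm.
assert (lpart a n m <> 0%C) by (apply lpart_nz; auto).
field. split; auto.
Qed.

Lemma lpart_shift (a : Z -> C) n m : lpart (fun k => a (k + 1)%Z) (n - 1)%Z m = lpart a n m.
Proof.
induction m; simpl.
- f_equal; lia.
- rewrite IHm. f_equal. f_equal. lia.
Qed.

Lemma lpart_split (a : Z -> C) n m k :
  lpart a n (m + S k) = Cmult (lpart a (n - Z.of_nat (S k))%Z m) (lpart a n k).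
Proof.
revert n. induction k as [|k IH]; intros n.
- rewrite Nat.add_1_r, lpart_S. replace (n - Z.of_nat 1)%Z with (n-1)%Z by lia. reflexivity.
- rewrite Nat.add_succ_r, lpart_S, IH, (lpart_S a n k).
  replace (n - 1 - Z.of_nat (S k))%Z with (n - Z.of_nat (S (S k)))%Z by lia. ring.
Qed.

Fixpoint lsum (f : Z -> R) (n : Z) (m : nat) : R :=
  match m with
  | O => f n
  | S m' => (f (n - Z.of_nat (S m'))%Z + lsum f n m')%R
  end.

Lemma lsum_nonneg f n m : (forall j, 0 <= f j)%R -> (0 <= lsum f n m)%R.
Proof. intros H. induction m; simpl; auto. specialize (H (n - Z.pos (Pos.of_succ_nat m))%Z). lra. Qed.

Lemma lsum_le f g n m : (forall j, (j <= n)%Z -> f j <= g j)%R -> (lsum f n m <= lsum g n m)%R.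
Proof.
intros H. induction m; simpl. apply H; lia.
apply Rplus_le_compat; auto. apply H; lia.
Qed.

Lemma lpart_lower (a : Z -> C) n m :
  (lsum (fun j => Cmod (Cminus (a j) 1)) n m <= 1)%R ->
  (1 - lsum (fun j => Cmod (Cminus (a j) 1)) n m <= Cmod (lpart a n m))%R.
Proof.
assert (B : forall x : C, (1 - Cmod (Cminus x 1) <= Cmod x)%R).
{ intros x. assert (T := Cmod_triangle x (Copp (Cminus x 1))).
  replace (x + - (x - 1))%C with (RtoC 1) in T by ring. rewrite Cmod_opp, Cmod_1 in T. lra. }
induction m; simpl lsum; simpl lpart.
- intros _. apply B.
- intros H. set (x := a (n - Z.pos (Pos.of_succ_nat m))%Z) in *.
  set (S0 := lsum (fun j => Cmod (Cminus (a j) 1)) n m) in *.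
  assert (HS : (0 <= S0)%R) by (apply lsum_nonneg; intros; apply Cmod_ge_0).
  assert (Hc := Cmod_ge_0 (Cminus x 1)).
  specialize (IHm ltac:(lra)). specialize (B x).
  rewrite Cmod_mult.
  assert (Hm := Cmod_ge_0 (lpart a n m)).
  nra.
Qed.

Lemma lprod_nz (a : Z -> C) :
  (forall j, a j <> 0%C) ->
  (exists N0, forall n, (n <= N0)%Z -> forall m,
      (lsum (fun j => Cmod (Cminus (a j) 1)) n m <= 1/2)%R) ->
  forall n P, is_lprod a n P -> P <> 0%C.
Proof.
intros Ha [N0 HN0] n P H HP. subst P.
set (k := Z.to_nat (n - N0)).
set (F := lpart a n k).
assert (HF : (0 < Cmod F)%R) by (apply Cmod_gt_0; apply lpart_nz; auto).
pose proof (proj1 (limC _ _) H (Cmod F / 2)%R ltac:(lra)) as [N HN].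
specialize (HN (N + S k)%nat ltac:(lia)).
rewrite lpart_split in HN. fold F in HN.
replace (Cminus (Cmult (lpart a (n - Z.of_nat (S k)) N) F) 0) with
  (Cmult (lpart a (n - Z.of_nat (S k)) N) F) in HN by ring.
rewrite Cmod_mult in HN.
assert (Hb := HN0 (n - Z.of_nat (S k))%Z ltac:(unfold k; lia) N).
assert (Hl := lpart_lower a (n - Z.of_nat (S k))%Z N ltac:(lra)).
nra.
Qed.

Definition gq (j : Z) : R := (/ (4 * (IZR j) ^ 2))%R.
Definition Tq (j : Z) : R := (/ (4 * (- IZR j - 1)))%R.

Lemma key_tele j : (j <= -2)%Z -> (gq j <= Tq j - Tq (j - 1))%R.
Proof.
intros Hj. unfold gq, Tq. rewrite minus_IZR.
assert (Ht : (IZR j <= -2)%R) by (apply IZR_le; lia).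
assert (E : (/ (4 * (- IZR j - 1)) - / (4 * (- (IZR j - 1) - 1)) = / (4 * IZR j * (IZR j + 1)))%R)
  by (field; split; lra).
rewrite E. apply Rinv_le_contravar; nra.
Qed.

Lemma tele n m : (n <= -2)%Z -> (lsum gq n m <= Tq n - Tq (n - Z.of_nat m - 1))%R.
Proof.
intros Hn. induction m.
- simpl lsum. replace (n - Z.of_nat 0 - 1)%Z with (n - 1)%Z by lia. apply key_tele; auto.
- simpl lsum. fold (Z.of_nat (S m)).
  assert (K := key_tele (n - Z.of_nat (S m)) ltac:(lia)).
  replace (n - Z.of_nat (S m) - 1 - 1)%Z with (n - Z.of_nat (S m) - 1 - 1)%Z in K by lia.
  replace (n - Z.of_nat m - 1)%Z with (n - Z.of_nat (S m))%Z in IHm by lia.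
  replace (n - Z.of_nat (S m) - 1)%Z with (n - Z.of_nat (S m) - 1)%Z by lia.
  lra.
Qed.

Lemma Tq_bounds j : (j <= -2)%Z -> (0 <= Tq j <= 1/4)%R.
Proof.
intros Hj. unfold Tq. assert (Ht : (IZR j <= -2)%R) by (apply IZR_le; lia).
split.
- left. apply Rinv_0_lt_compat. lra.
- replace (1/4)%R with (/ 4)%R by field. apply Rinv_le_contravar; lra.
Qed.

Lemma summ (q r : Z -> C) (sh : Z) :
  rapidly_decreasing q -> rapidly_decreasing r ->
  exists N0, forall n, (n <= N0)%Z -> forall m,
    (lsum (fun j => Cmod (Cmult (q j) (r (j + sh)%Z))) n m <= 1/2)%R.
Proof.
intros Hq Hr.
destruct (Hq 2%nat (1/4)%R ltac:(lra)) as [N1 H1].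
destruct (Hr 0%nat 1%R ltac:(lra)) as [N2 H2].
exists (- (Z.abs N1 + Z.abs N2 + Z.abs sh + 2))%Z. intros n Hn m.
apply Rle_trans with (lsum gq n m).
- apply lsum_le. intros j Hj.
  rewrite Cmod_mult.
  specialize (H1 j ltac:(lia)). specialize (H2 (j + sh)%Z ltac:(lia)).
  simpl in H2. rewrite Rmult_1_l in H2.
  rewrite abs_IZR, pow2_abs in H1.
  assert (Hj2 : (IZR j <= -2)%R) by (apply IZR_le; lia).
  assert (Hpos : (0 < IZR j ^ 2)%R) by nra.
  assert (Hqj : (Cmod (q j) <= gq j)%R).
  { unfold gq. apply Rmult_le_reg_l with (4 * IZR j ^ 2)%R. nra.
    rewrite Rinv_r by lra. nra. }
  assert (Hq0 := Cmod_ge_0 (q j)). assert (Hr0 := Cmod_ge_0 (r (j + sh)%Z)).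
  nra.
- eapply Rle_trans. apply tele. lia.
  assert (A := Tq_bounds n ltac:(lia)).
  assert (B := Tq_bounds (n - Z.of_nat m - 1) ltac:(lia)).
  lra.
Qed.

Lemma lim_shift (f : nat -> C) (L : C) :
  filterlim f eventually (@locally C_UniformSpace L) ->
  filterlim (fun m => f (S m)) eventually (@locally C_UniformSpace L).
Proof.
intros H. apply (proj2 (limC _ _)). intros eps Heps.
destruct (proj1 (limC _ _) H eps Heps) as [N HN]. exists N. intros m Hm. apply HN. lia.
Qed.

Lemma lim_const (c : C) :
  filterlim (fun _ : nat => c) eventually (@locally C_UniformSpace c).
Proof.
apply (proj2 (limC _ _)). intros eps Heps. exists 0%nat. intros.
replace (Cminus c c) with (RtoC 0) by ring. rewrite Cmod_0. lra.
Qed.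

Lemma lprod_rec (a : Z -> C) (P : Z -> C) :
  (forall n, is_lprod a n (P n)) -> forall n, P n = Cmult (P (n - 1)%Z) (a n).
Proof.
intros H n.
apply (lim_unique (fun m => lpart a n (S m))).
- apply lim_shift. apply H.
- apply (filterlim_ext (fun m => Cmult (lpart a (n-1)%Z m) (a n))).
  + intros m. rewrite lpart_S. reflexivity.
  + apply lim_mult. apply H. apply lim_const.
Qed.

Lemma Cinv_inv' (x : C) : x <> 0%C -> x = Cinv (Cinv x).
Proof. intros H. field. auto. Qed.

Theorem proposition3p2 (q r : Z -> C) (D E : Z -> C) :
  rapidly_decreasing q -> rapidly_decreasing r ->
  (forall n : Z, Cminus 1 (Cmult (q n) (r n)) <> 0) ->
  (forall n : Z, Cplus 1 (Cmult (q n) (r (n + 1)%Z)) <> 0) ->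
  (forall n : Z, is_lprod (fun j => Cminus 1 (Cmult (q j) (r j))) n (D n)) ->
  (forall n : Z, is_lprod (fun j => Cplus 1 (Cmult (q j) (r (j + 1)%Z))) n (E n)) ->
  let u := fun n : Z => Cdiv (Cmult (q n) (E (n - 1)%Z)) (D n) in
  let s := fun n : Z => Cdiv (Cmult (r (n + 1)%Z) (D n)) (E n) in
  forall n : Z,
    (exists P, is_lprod (fun k => Cplus 1 (Cmult (u (k + 1)%Z) (s k))) (n - 1)%Z P
               /\ D n = Cinv P) /\
    (exists P, is_lprod (fun k => Cminus 1 (Cmult (u k) (s k))) n P
               /\ E n = Cinv P) /\
    (exists P, is_lprod (fun k => Cdiv (Cminus 1 (Cmult (u k) (s k)))
                                       (Cplus 1 (Cmult (u (k + 1)%Z) (s k)))) (n - 1)%Z P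
               /\ q n = Cmult (u n) P) /\
    (exists P, is_lprod (fun k => Cdiv (Cplus 1 (Cmult (u k) (s (k - 1)%Z)))
                                       (Cminus 1 (Cmult (u k) (s k)))) (n - 1)%Z P
               /\ r n = Cmult (s (n - 1)%Z) P).
Proof.
intros Hq Hr HaD HaE HD HE u s n.
set (aD := fun j => Cminus 1 (Cmult (q j) (r j))) in *.
set (aE := fun j => Cplus 1 (Cmult (q j) (r (j + 1)%Z))) in *.
assert (HDnz : forall k, D k <> 0%C).
{ intros k. refine (lprod_nz aD HaD _ k (D k) (HD k)).
  destruct (summ q r 0 Hq Hr) as [N0 HN0]. exists N0. intros n0 Hn0 m.
  eapply Rle_trans; [|apply (HN0 n0 Hn0 m)]. apply lsum_le. intros j _.
  rewrite Z.add_0_r. unfold aD. right.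
  replace (Cminus (Cminus 1 (Cmult (q j) (r j))) 1) with (Copp (Cmult (q j) (r j))) by ring.
  apply Cmod_opp. }
assert (HEnz : forall k, E k <> 0%C).
{ intros k. refine (lprod_nz aE HaE _ k (E k) (HE k)).
  destruct (summ q r 1 Hq Hr) as [N0 HN0]. exists N0. intros n0 Hn0 m.
  eapply Rle_trans; [|apply (HN0 n0 Hn0 m)]. apply lsum_le. intros j _.
  unfold aE. right. f_equal. ring. }
assert (RD := lprod_rec aD D HD).
assert (RE := lprod_rec aE E HE).
assert (I1 : forall k, Cplus 1 (Cmult (u (k + 1)%Z) (s k)) = Cinv (aD (k + 1)%Z)).
{ intros k. unfold u, s. replace (k + 1 - 1)%Z with k by lia.
  rewrite (RD (k + 1)%Z). replace (k + 1 - 1)%Z with k by lia.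
  assert (H1 := HDnz k). assert (H2 := HEnz k). assert (H3 := HaD (k + 1)%Z).
  fold (aD (k+1)%Z) in H3. unfold aD in *. field; auto. }
assert (I2 : forall k, Cminus 1 (Cmult (u k) (s k)) = Cinv (aE k)).
{ intros k. unfold u, s. rewrite (RE k).
  assert (H1 := HDnz k). assert (H2 := HEnz (k - 1)%Z). assert (H3 := HaE k).
  fold (aE k) in H3. unfold aE in *. field; auto. }
split; [|split; [|split]].
- exists (Cinv (D n)). split.
  + unfold is_lprod. apply (filterlim_ext (fun m => Cinv (lpart aD n m))).
    * intros m. symmetry.
      rewrite (lpart_ext _ (fun k => (fun j => Cinv (aD j)) (k+1)%Z)) by (intros; apply I1).
      rewrite (lpart_shift (fun j => Cinv (aD j))), lpart_inv; auto.
    * apply lim_inv; [auto | apply HD].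
  + apply Cinv_inv'; auto.
- exists (Cinv (E n)). split.
  + unfold is_lprod. apply (filterlim_ext (fun m => Cinv (lpart aE n m))).
    * intros m. symmetry.
      rewrite (lpart_ext _ (fun k => Cinv (aE k))) by (intros; apply I2).
      rewrite lpart_inv; auto.
    * apply lim_inv; [auto | apply HE].
  + apply Cinv_inv'; auto.
- exists (Cmult (D n) (Cinv (E (n - 1)%Z))). split.
  + unfold is_lprod.
    apply (filterlim_ext (fun m => Cmult (lpart aD n m) (Cinv (lpart aE (n - 1)%Z m)))).
    * intros m. symmetry.
      rewrite (lpart_ext _ (fun k => Cmult ((fun j => aD j) (k+1)%Z) (Cinv (aE k)))).
      2:{ intros k. unfold Cdiv. rewrite I1, I2. assert (H3 := HaD (k + 1)%Z).
          fold (aD (k+1)%Z) in H3. assert (H4 := HaE k). fold (aE k) in H4. field; auto. }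
      rewrite lpart_mul, (lpart_shift aD), lpart_inv; auto.
    * apply lim_mult. apply HD. apply lim_inv; [auto | apply HE].
  + unfold u. assert (H1 := HDnz n). assert (H2 := HEnz (n - 1)%Z). field. auto.
- exists (Cmult (Cinv (D (n - 1)%Z)) (E (n - 1)%Z)). split.
  + unfold is_lprod.
    apply (filterlim_ext (fun m => Cmult (Cinv (lpart aD (n - 1)%Z m)) (lpart aE (n - 1)%Z m))).
    * intros m. symmetry.
      rewrite (lpart_ext _ (fun k => Cmult (Cinv (aD k)) (aE k))).
      2:{ intros k. unfold Cdiv. 
          assert (I1' := I1 (k - 1)%Z). replace (k - 1 + 1)%Z with k in I1' by lia.
          rewrite I1', I2. assert (H3 := HaE k).
          fold (aE k) in H3. assert (H4 := HaD k). fold (aD k) in H4. field; auto. }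
      rewrite lpart_mul, lpart_inv; auto.
    * apply lim_mult. apply lim_inv; [auto | apply HD]. apply HE.
  + unfold s. replace (n - 1 + 1)%Z with n by lia.
    assert (H1 := HDnz (n - 1)%Z). assert (H2 := HEnz (n - 1)%Z). field. auto.
Qed.
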